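(* Let $M$ be a duplicial module in a pre-additive category $\mathcal A$. Then for every $n\ge0$, $$\pi_n=p_n\circ T_n=T_n\circ p_n .$$ In particular, if $M$ is cyclic ($T_n=1$ for all $n$), then $\pi_n=p_n$.
   Context: Let $\mathcal A$ be a pre-additive category. Let $\Lambda_\infty$ be the category with objects $[n]$, $n\ge0$, where $\Lambda_\infty([m],[n])$ is the set of weakly monotone maps $f:\mathbb Z\to\mathbb Z$ with $f(j+m+1)=f(j)+n+1$ for all $j$ (determined by values on $\{0,\dots,m\}$). Let $\Lambda_+\subset\Lambda_\infty$ be the subcategory of those $f$ with $f(0)\ge0$, and $\Delta\subset\Lambda_+$ those with also $f(m)\le n$. Define $\varepsilon^n_i:[n-1]\to[n]$ ($n\ge1$, $0\le i\le n$) by $\varepsilon^n_i(j)=j$ for $0\le j<i$, $j+1$ for $i\le j\le n-1$; $\eta^n_i:[n+1]\to[n]$ ($0\le i\le n+1$) by $\eta^n_i(j)=j$ for $0\le j\le i$, $j-1$ for $i<j\le n+1$; $\tau_n:[n]\to[n]$, $\tau_n(j)=j+1$ ($=\eta^n_{n+1}\varepsilon^{n+1}_0$). A duplicial module is a functor $M:\Lambda_+^{op}\to\mathcal A$. Write $M_n=M([n])$, $\partial_{n,i}=M(\varepsilon^n_i):M_n\to M_{n-1}$, $s_{n,i}=M(\eta^n_i):M_n\to M_{n+1}$, $t_n=M(\tau_n)=\partial_{n+1,0}s_{n,n+1}$, $T_n=t_n^{n+1}$; $M$ is cyclic if $T_n=1$ for all $n$. Convention: $M_{-1}=0$, maps to/from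 it are $0$. Define $p_n=(1-s_{n-1,0}\partial_{n,1})(1-s_{n-1,1}\partial_{n,2})\cdots(1-s_{n-1,n-1}\partial_{n,n})$ ($p_0=1$), the Karoubi operator $\kappa_n=(-1)^n(\partial_{n+1,0}s_{n,n+1}-s_{n-1,n}\partial_{n,0})$ and the Dwyer–Kan operator $\pi_n=(-1)^n\partial_{n+1,0}\kappa_{n+1}^n s_{n,n+1}$. *)

(* Defs.v *)
From HB Require Import structures.
From mathcomp Require Import all_boot all_order all_algebra.
Set Implicit Arguments. Unset Strict Implicit. Unset Printing Implicit Defensive.
Import Order.TTheory GRing.Theory Num.Theory.
Local Open Scope ring_scope.

Record PreAdd := {
  Obj : Type;
  Hom : Obj -> Obj -> zmodType;
  idm : forall a, Hom a a;
  hcomp : forall a b c, Hom b c -> Hom a b -> Hom a c;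
  hcompA : forall a b c d (h : Hom c d) (g : Hom b c) (f : Hom a b),
      hcomp h (hcomp g f) = hcomp (hcomp h g) f;
  comp1m : forall a b (f : Hom a b), hcomp (idm b) f = f;
  compm1 : forall a b (f : Hom a b), hcomp f (idm a) = f;
  compDl : forall a b c (g1 g2 : Hom b c) (f : Hom a b),
      hcomp (g1 + g2) f = hcomp g1 f + hcomp g2 f;
  compDr : forall a b c (g : Hom b c) (f1 f2 : Hom a b),
      hcomp g (f1 + f2) = hcomp g f1 + hcomp g f2 }.

Arguments idm {C} a : rename.
Arguments hcomp {C a b c} : rename.

(* Morphisms [m] -> [n] of Lambda_+ : weakly monotone f : Z -> Z with
   f (j + m + 1) = f j + n + 1 and f 0 >= 0. *)
Definition LamPlus (m n : nat) (f : int -> int) : Prop :=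
  (forall x y : int, x <= y -> f x <= f y) /\
  (forall j : int, f (j + (m.+1)%:Z) = f j + (n.+1)%:Z) /\
  0 <= f 0.

(* The morphism part is
   given on all functions Z -> Z, but only constrained on morphisms of
   Lambda_+ (values elsewhere are irrelevant). *)
Record Duplicial (C : PreAdd) := {
  Mobj : nat -> Obj C;
  Mmor : forall m n : nat, (int -> int) -> Hom (Mobj n) (Mobj m);
  Mmor_id : forall m, Mmor m m id = idm (Mobj m);
  Mmor_comp : forall (m n k : nat) (f g : int -> int),
      LamPlus m n f -> LamPlus n k g ->
      Mmor m k (g \o f) = hcomp (Mmor m n f) (Mmor n k g) }.

(* extension of g : {0..m} -> Z to the quasi-periodic map [m] -> [n] *)
Definition qext (m n : nat) (g : int -> int) (j : int) : int :=
  g (j %% (m.+1)%:Z)%Z + (j %/ (m.+1)%:Z)%Z * (n.+1)%:Z.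

Definition eps (k i : nat) : int -> int :=
  qext k k.+1 (fun j => if j < i%:Z then j else j + 1).

Definition etaL (n i : nat) : int -> int :=
  qext n.+1 n (fun j => if j <= i%:Z then j else j - 1).

Section Ops.
Variables (C : PreAdd) (M : Duplicial C).

Local Notation M_ n := (Mobj M n).

Definition face (k i : nat) : Hom (M_ k.+1) (M_ k) := Mmor M k k.+1 (eps k i).
Definition dgn (n i : nat) : Hom (M_ n) (M_ n.+1) := Mmor M n.+1 n (etaL n i).

Definition tn (n : nat) : Hom (M_ n) (M_ n) := hcomp (face n 0) (dgn n n.+1).

Definition hpow (a : Obj C) (f : Hom a a) (k : nat) : Hom a a :=
  iter k (hcomp f) (idm a).

Definition TT (n : nat) : Hom (M_ n) (M_ n) := hpow (tn n) n.+1.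

Definition sgn (a b : Obj C) (n : nat) (x : Hom a b) : Hom a b :=
  if odd n then - x else x.

Definition pp (n : nat) : Hom (M_ n) (M_ n) :=
  match n with
  | 0 => idm (M_ 0)
  | k.+1 => foldr (fun i acc => hcomp (idm (M_ k.+1) - hcomp (dgn k i) (face k i.+1)) acc)
                  (idm (M_ k.+1)) (iota 0 k.+1)
  end.

Definition kappaS (n : nat) : Hom (M_ n.+1) (M_ n.+1) :=
  sgn n.+1 (hcomp (face n.+1 0) (dgn n.+1 n.+2) - hcomp (dgn n n.+1) (face n 0)).

Definition piDK (n : nat) : Hom (M_ n) (M_ n) :=
  sgn n (hcomp (face n 0) (hcomp (hpow (kappaS n) n) (dgn n n.+1))).

End Ops.

(* Main.v *)
Require Import Defs.
From HB Require Import structures.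
From mathcomp Require Import all_boot all_order all_algebra.
From mathcomp Require Import zify.
From Stdlib Require Import FunctionalExtensionality.
Set Implicit Arguments. Unset Strict Implicit. Unset Printing Implicit Defensive.
Import Order.TTheory GRing.Theory Num.Theory.
Local Open Scope ring_scope.

Definition QP (m : nat) (c : int) (f : int -> int) :=
  forall j, f (j + (m.+1)%:Z) = f j + c.

Lemma QP_nat m c f : QP m c f -> forall x (q : nat),
  f (x + q%:Z * (m.+1)%:Z) = f x + q%:Z * c.
Proof.
move=> H x; elim=> [|q IH]; first by rewrite !mul0r !addr0.
have -> : x + (q.+1)%:Z * (m.+1)%:Z = (x + q%:Z * (m.+1)%:Z) + (m.+1)%:Z by nia.
rewrite H IH; nia.
Qed.

Lemma QP_int m c f : QP m c f -> forall x (q : int),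
  f (x + q * (m.+1)%:Z) = f x + q * c.
Proof.
move=> H x [q|q]; first exact: QP_nat.
have := QP_nat H (x + Negz q * (m.+1)%:Z) q.+1.
have -> : x + Negz q * (m.+1)%:Z + (q.+1)%:Z * (m.+1)%:Z = x.
  rewrite NegzE; nia.
move=> ->. rewrite NegzE; nia.
Qed.

Lemma QP_eq m c f g : QP m c f -> QP m c g ->
  (forall r : int, 0 <= r -> r <= m%:Z -> f r = g r) -> f = g.
Proof.
move=> Hf Hg H; apply: functional_extensionality => j.
rewrite (divz_eq j (m.+1)%:Z) addrC !(QP_int Hf, QP_int Hg) H //.
  by rewrite modz_ge0.
have := @ltz_pmod j (m.+1)%:Z isT. lia.
Qed.

Lemma QP_comp m n k f g : QP m (n.+1)%:Z f -> QP n (k.+1)%:Z g ->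
  QP m (k.+1)%:Z (g \o f).
Proof. by move=> Hf Hg j /=; rewrite Hf Hg. Qed.

Lemma LP_QP m n f : LamPlus m n f -> QP m (n.+1)%:Z f.
Proof. by case=> _ []. Qed.

Lemma qext_QP m n g : QP m (n.+1)%:Z (qext m n g).
Proof.
move=> j; rewrite /qext.
have -> : ((j + (m.+1)%:Z) %% (m.+1)%:Z)%Z = (j %% (m.+1)%:Z)%Z by rewrite modzDr.
rewrite divzDr ?dvdzz // divzz /=. rewrite mulrDl mul1r addrA //.
Qed.

Lemma qext_base m n g r : 0 <= r -> r <= m%:Z -> qext m n g r = g r.
Proof.
move=> H1 H2; rewrite /qext modz_small ?divz_small ?mul0r ?addr0 //; apply/andP; split => //=; lia.
Qed.

Lemma mono_step (f : int -> int) : (forall j, f j <= f (j + 1)) -> forall x y, x <= y -> f x <= f y.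
Proof.
move=> H x y Hxy.
have [k ->] : exists k : nat, y = x + k%:Z by exists `|y - x|%N; lia.
elim: k => [|k IH]; first by rewrite addr0.
apply: le_trans IH _. have -> : x + (k.+1)%:Z = (x + k%:Z) + 1 by lia. exact: H.
Qed.

Lemma LamPlus_qext m n g :
  (forall r : int, 0 <= r -> r < m%:Z -> g r <= g (r + 1)) ->
  g m%:Z <= g 0 + (n.+1)%:Z -> 0 <= g 0 -> LamPlus m n (qext m n g).
Proof.
move=> Hg Hm H0; split; last split; last by rewrite qext_base.
  apply: mono_step => j.
  have HQ := qext_QP m n g.
  rewrite (divz_eq j (m.+1)%:Z) addrC.
  have := @ltz_pmod j (m.+1)%:Z isT. have := @modz_ge0 j (m.+1)%:Z isT.
  move: (j %% _)%Z (j %/ _)%Z => r q Hr0 Hr1.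
  rewrite -addrA [q * _ + 1]addrC addrA !(QP_int HQ) lerD2r.
  have [Hlt|Hge] := ltP r m%:Z.
    rewrite !qext_base //; try lia. exact: Hg.
  have -> : r = m%:Z by lia.
  have -> : m%:Z + 1 = 0 + (m.+1)%:Z by lia.
  rewrite HQ !qext_base //; lia.
exact: qext_QP.
Qed.

Lemma LP_eps k i : LamPlus k k.+1 (eps k i).
Proof.
apply: LamPlus_qext => [r H1 H2||] /=.
- do ?[case: ifP => ?]; lia.
- do ?[case: ifP => ?]; lia.
- do ?[case: ifP => ?]; lia.
Qed.

Lemma LP_etaL n i : LamPlus n.+1 n (etaL n i).
Proof.
apply: LamPlus_qext => [r H1 H2||] /=.
- do ?[case: ifP => ?]; lia.
- do ?[case: ifP => ?]; lia.
- do ?[case: ifP => ?]; lia.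
Qed.

Lemma LP_sh m (k : nat) : LamPlus m m (fun j => j + k%:Z).
Proof. split; last split; move=> *; lia. Qed.

Lemma LP_id m : LamPlus m m id.
Proof. split; last split; move=> * //=; lia. Qed.

Lemma eps_spec k i (r : int) :
  r < 0 \/ (k.+1)%:Z < r \/
  (0 <= r /\ r < i%:Z /\ r <= k%:Z /\ eps k i r = r) \/
  (0 <= r /\ i%:Z <= r /\ r <= k%:Z /\ eps k i r = r + 1) \/
  (r = (k.+1)%:Z /\ i = 0%N /\ eps k i r = (k.+3)%:Z) \/
  (r = (k.+1)%:Z /\ (0 < i)%N /\ eps k i r = (k.+2)%:Z).
Proof.
have [H|H] := ltP r 0; first by left.
have [H'|H'] := ltP (k.+1)%:Z r; first by right; left.
have [H2|H2] := ltP r (k.+1)%:Z.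
  rewrite /eps qext_base; last by lia. 2: done.
  case: ifP => ?; lia.
have -> : r = 0 + (k.+1)%:Z by lia.
rewrite (LP_QP (LP_eps k i)) /eps qext_base //=; case: ifP => ?; lia.
Qed.

Lemma etaL_spec n i (r : int) :
  r < 0 \/ (n.+2)%:Z < r \/
  (0 <= r /\ r <= i%:Z /\ r <= (n.+1)%:Z /\ etaL n i r = r) \/
  (i%:Z < r /\ r <= (n.+1)%:Z /\ etaL n i r = r - 1) \/
  (r = (n.+2)%:Z /\ etaL n i r = (n.+1)%:Z).
Proof.
have [H|H] := ltP r 0; first by left.
have [H'|H'] := ltP (n.+2)%:Z r; first by right; left.
have [H2|H2] := ltP r (n.+2)%:Z.
  rewrite /etaL qext_base; last by lia. 2: done.
  case: ifP => ?; lia.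
have -> : r = 0 + (n.+2)%:Z by lia.
rewrite (LP_QP (LP_etaL n i)) /etaL qext_base //=; do ?[case: ifP => ?]; lia.
Qed.

Ltac noapp x := lazymatch x with | context [eps _ _ _] => fail | context [etaL _ _ _] => fail | _ => idtac end.

Ltac specs := repeat match goal with
 | |- context [eps ?k ?i ?x] => noapp x;
     let e := fresh "e" in have := eps_spec k i x; generalize (eps k i x) => e
 | |- context [etaL ?k ?i ?x] => noapp x;
     let e := fresh "e" in have := etaL_spec k i x; generalize (etaL k i x) => e
 end.

Ltac QPs := repeat first [ apply: QP_comp | apply: LP_QP; solve [apply: LP_eps | apply: LP_etaL | apply: LP_sh | apply: LP_id] ].

Ltac fcheck := apply: QP_eq; [QPs | QPs | move=> r ? ? /=; specs; move=> *; lia].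



Section Cat.
Variables (C : PreAdd) (M : Duplicial C).
Local Notation d := (face M).
Local Notation s := (dgn M).
Local Notation Mo := (Mobj M).
Local Notation Hm a b := (@Defs.Hom C a b).
Implicit Types a b c : Obj C.

Lemma hcomp0l a b c (f : Hm a b) : hcomp (0 : Hm b c) f = 0.
Proof. apply: (addrI (hcomp (0 : Hm b c) f)); by rewrite -compDl !addr0. Qed.
Lemma hcomp0r a b c (g : Hm b c) : hcomp g (0 : Hm a b) = 0.
Proof. apply: (addrI (hcomp g (0 : Hm a b))); by rewrite -compDr !addr0. Qed.
Lemma hcompNl a b c (g : Hm b c) (f : Hm a b) : hcomp (- g) f = - hcomp g f.
Proof. apply: (addrI (hcomp g f)); by rewrite -compDl !subrr hcomp0l. Qed.
Lemma hcompNr a b c (g : Hm b c) (f : Hm a b) : hcomp g (- f) = - hcomp g f.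
Proof. apply: (addrI (hcomp g f)); by rewrite -compDr !subrr hcomp0r. Qed.
Lemma hcompBl a b c (g1 g2 : Hm b c) (f : Hm a b) : hcomp (g1 - g2) f = hcomp g1 f - hcomp g2 f.
Proof. by rewrite compDl hcompNl. Qed.
Lemma hcompBr a b c (g : Hm b c) (f1 f2 : Hm a b) : hcomp g (f1 - f2) = hcomp g f1 - hcomp g f2.
Proof. by rewrite compDr hcompNr. Qed.

Lemma Mcomm m n n' k f g f' g' : LamPlus m n f -> LamPlus n k g ->
  LamPlus m n' f' -> LamPlus n' k g' -> g \o f = g' \o f' ->
  hcomp (Mmor M m n f) (Mmor M n k g) = hcomp (Mmor M m n' f') (Mmor M n' k g').
Proof. by move=> H1 H2 H3 H4 H5; rewrite -!Mmor_comp // H5. Qed.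

Lemma Mcomp_id m n f g : LamPlus m n f -> LamPlus n m g -> g \o f = (fun x => x) ->
  hcomp (Mmor M m n f) (Mmor M n m g) = idm (Mo m).
Proof. by move=> H1 H2 H3; rewrite -Mmor_comp // H3 Mmor_id. Qed.

Ltac LPs := solve [apply: LP_eps | apply: LP_etaL | apply: LP_sh | apply: LP_id].

Lemma ds_id k i : hcomp (d k i) (s k i) = idm (Mo k).
Proof. apply: Mcomp_id; try LPs. fcheck. Qed.

Lemma ds_id1 k i : hcomp (d k i.+1) (s k i) = idm (Mo k).
Proof. apply: Mcomp_id; try LPs. fcheck. Qed.

Lemma ds_lt k i j : (i <= j)%N -> (j <= k.+1)%N -> ((0 < i)%N || (j <= k)%N) ->
  hcomp (d k.+1 i) (s k.+1 j.+1) = hcomp (s k j) (d k i).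
Proof. move=> H1 H2 H3; apply: Mcomm; try LPs. fcheck. Qed.

Lemma ds_gt k i j : (j < i)%N -> (i <= k.+1)%N ->
  hcomp (d k.+1 i.+1) (s k.+1 j) = hcomp (s k j) (d k i).
Proof. move=> H1 H2; apply: Mcomm; try LPs. fcheck. Qed.

Lemma ss k i j : (i <= j)%N -> (j <= k.+1)%N ->
  hcomp (s k.+1 j.+1) (s k i) = hcomp (s k.+1 i) (s k j).
Proof. move=> H1 H2; apply: Mcomm; try LPs. fcheck. Qed.

Lemma dd k i j : (i <= j)%N ->
  hcomp (d k i) (d k.+1 j.+1) = hcomp (d k j) (d k.+1 i).
Proof. move=> H1; apply: Mcomm; try LPs. fcheck. Qed.

Lemma tn_eq k : tn M k = Mmor M k k (fun j => j + (1%N)%:Z).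
Proof. rewrite /tn /face /dgn -Mmor_comp; try LPs. congr (Mmor _ _ _ _). fcheck. Qed.

Lemma dt k i : (i <= k)%N -> hcomp (d k i) (tn M k.+1) = hcomp (tn M k) (d k i.+1).
Proof. move=> H1; rewrite !tn_eq; apply: Mcomm; try LPs. fcheck. Qed.

Lemma dt_last k : hcomp (d k k.+1) (tn M k.+1) = d k 0.
Proof. rewrite tn_eq /face -Mmor_comp; try LPs. congr (Mmor _ _ _ _). fcheck. Qed.

Lemma ts k j : (j <= k)%N -> hcomp (tn M k.+1) (s k j.+1) = hcomp (s k j) (tn M k).
Proof. move=> H1; rewrite !tn_eq; apply: Mcomm; try LPs. fcheck. Qed.

Lemma ts0 k : hcomp (tn M k.+1) (s k 0) = s k k.+1.
Proof. rewrite tn_eq /dgn -Mmor_comp; try LPs. congr (Mmor _ _ _ _). fcheck. Qed.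

End Cat.


Section Main.
Variables (C : PreAdd) (M : Duplicial C).
Local Notation d := (face M).
Local Notation s := (dgn M).
Local Notation Mo := (Mobj M).
Local Notation Hm a b := (@Defs.Hom C a b).
Implicit Types a b c : Obj C.

Lemma hpowS a (f : Hm a a) k : hpow f k.+1 = hcomp f (hpow f k).
Proof. by []. Qed.

Lemma hpowD a (f : Hm a a) k l : hpow f (k + l) = hcomp (hpow f k) (hpow f l).
Proof. elim: k => [|k IH]; first by rewrite add0n /= comp1m.
by rewrite addSn !hpowS IH hcompA. Qed.

Lemma hpow_tn k p : hpow (tn M k) p = Mmor M k k (fun j => j + p%:Z).
Proof.
elim: p => [|p IH].
  rewrite /= -(Mmor_id M k); congr (Mmor _ _ _ _); apply: functional_extensionality => j; lia.
rewrite hpowS IH tn_eq -Mmor_comp; try solve [apply: LP_sh].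
congr (Mmor _ _ _ _); apply: functional_extensionality => j /=; lia.
Qed.

Lemma TT_nat (p q : nat) f : LamPlus p q f ->
  hcomp (TT M p) (Mmor M p q f) = hcomp (Mmor M p q f) (TT M q).
Proof.
move=> Hf; rewrite /TT !hpow_tn; apply: Mcomm => //; try apply: LP_sh.
apply: functional_extensionality => j /=; exact: (LP_QP Hf).
Qed.

Lemma sgnS a b n (x : Hm a b) : sgn n.+1 x = - sgn n x.
Proof. rewrite /sgn /=; case: (odd n) => //=; by rewrite opprK. Qed.
Lemma sgn_sgn a b n (x : Hm a b) : sgn n (sgn n x) = x.
Proof. rewrite /sgn; case: (odd n) => //; by rewrite opprK. Qed.
Lemma sgnD a b n (x y : Hm a b) : sgn n (x + y) = sgn n x + sgn n y.
Proof. rewrite /sgn; case: (odd n) => //; by rewrite opprD. Qed.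
Lemma sgnB a b n (x y : Hm a b) : sgn n (x - y) = sgn n x - sgn n y.
Proof. rewrite /sgn; case: (odd n) => //; by rewrite opprB opprK addrC. Qed.
Lemma sgn0 a b n : sgn n (0 : Hm a b) = 0.
Proof. rewrite /sgn; case: (odd n) => //; by rewrite oppr0. Qed.
Lemma hcomp_sgnl a b c n (g : Hm b c) (f : Hm a b) : hcomp (sgn n g) f = sgn n (hcomp g f).
Proof. rewrite /sgn; case: (odd n) => //; by rewrite hcompNl. Qed.
Lemma hcomp_sgnr a b c n (g : Hm b c) (f : Hm a b) : hcomp g (sgn n f) = sgn n (hcomp g f).
Proof. rewrite /sgn; case: (odd n) => //; by rewrite hcompNr. Qed.

Lemma hpowN a (f : Hm a a) k : hpow (- f) k = sgn k (hpow f k).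
Proof. elim: k => [|k IH] //. by rewrite !hpowS IH hcompNl hcomp_sgnr sgnS. Qed.

Lemma hpow_sgn a (f : Hm a a) n : hpow (sgn n f) n = sgn n (hpow f n).
Proof. rewrite /sgn; case: ifP => H //. by rewrite hpowN /sgn H. Qed.

Inductive Span a k (lo hi : nat) : Hm a (Mo k.+1) -> Prop :=
| Sp0 : Span lo hi 0
| SpD x y : Span lo hi x -> Span lo hi y -> Span lo hi (x + y)
| SpG j (Z : Hm a (Mo k)) : (lo <= j)%N -> (j <= hi)%N -> Span lo hi (hcomp (s k j) Z).

Lemma SpanN a k lo hi (x : Hm a (Mo k.+1)) : Span lo hi x -> Span lo hi (- x).
Proof.
elim=> [|y z _ Hy _ Hz|j Z H1 H2].
- rewrite oppr0; exact: Sp0.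
- rewrite opprD; exact: SpD.
- rewrite -hcompNr; exact: SpG.
Qed.

Lemma Span_sgn a k lo hi n (x : Hm a (Mo k.+1)) : Span lo hi x -> Span lo hi (sgn n x).
Proof. rewrite /sgn; case: (odd n) => //; exact: SpanN. Qed.

Lemma Span_map a k k' lo hi lo' hi' (f : Hm (Mo k.+1) (Mo k'.+1)) :
  (forall j, (lo <= j)%N -> (j <= hi)%N -> exists j' (W : Hm (Mo k) (Mo k')),
      [/\ (lo' <= j')%N, (j' <= hi')%N & hcomp f (s k j) = hcomp (s k' j') W]) ->
  forall x : Hm a (Mo k.+1), Span lo hi x -> Span lo' hi' (hcomp f x).
Proof.
move=> Hf x; elim=> [|y z _ Hy _ Hz|j Z H1 H2].
- rewrite hcomp0r; exact: Sp0.
- rewrite compDr; exact: SpD.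
- have [j' [W [H3 H4 H5]]] := Hf j H1 H2.
  rewrite hcompA H5 -hcompA; exact: SpG.
Qed.



Lemma kappa_eq n : kappaS M n = sgn n.+1 (tn M n.+1 - hcomp (s n n.+1) (d n 0)).
Proof. by []. Qed.

Lemma A1 m i : (0 < i)%N -> (i <= m.+1)%N -> exists W : Hm (Mo m.+1) (Mo m.+1),
  hcomp (d m.+1 i) (kappaS M m.+1) = hcomp W (d m.+1 i.+1).
Proof.
move=> H1 H2; exists (sgn m.+2 (tn M m.+1 - hcomp (s m m.+1) (d m 0))).
rewrite kappa_eq hcomp_sgnr hcompBr dt // hcompA (@ds_lt C M m) //; last by rewrite H1.
rewrite -hcompA -(dd M m) // hcompA -hcompBl hcomp_sgnl //.
Qed.

Lemma A2 n : hcomp (d n n.+1) (kappaS M n) = 0.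
Proof.
rewrite kappa_eq hcomp_sgnr hcompBr dt_last hcompA ds_id comp1m subrr sgn0 //.
Qed.

Lemma A3 m k : forall i, (0 < i)%N -> (i + k <= m.+2)%N ->
  exists W : Hm (Mo m.+1) (Mo m.+1),
  hcomp (d m.+1 i) (hpow (kappaS M m.+1) k) = hcomp W (d m.+1 (i + k)).
Proof.
elim: k => [|k IH] i H1 H2.
  exists (idm _); rewrite /= compm1 comp1m addn0 //.
have H3 : (i <= m.+1)%N by lia.
have H4 : (i.+1 + k <= m.+2)%N by lia.
have [W HW] := A1 H1 H3.
have [W' HW'] := IH i.+1 isT H4.
exists (hcomp W W'); rewrite hpowS hcompA HW -hcompA HW' hcompA addSnnS //.
Qed.

Lemma A4 m i : (0 < i)%N -> (i <= m.+1)%N -> hcomp (d m i) (piDK M m.+1) = 0.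
Proof.
case: i => [//|i] H1 H2; rewrite /piDK hcomp_sgnr hcompA -(dd M m) //.
have -> : hpow (kappaS M m.+1) m.+1 =
   hcomp (hpow (kappaS M m.+1) (m - i)) (hpow (kappaS M m.+1) i.+1).
  by rewrite -hpowD; congr hpow; lia.
have H3 : (i.+2 + (m - i) <= m.+2)%N by lia.
have [W HW] := @A3 m (m - i) i.+2 isT H3.
rewrite -!hcompA (hcompA (d m.+1 i.+2)) HW.
have -> : (i.+2 + (m - i) = m.+2)%N by lia.
rewrite -(hcompA W) (hcompA (d m.+1 m.+2)) A2 hcomp0l !hcomp0r sgn0 //.
Qed.

Definition pF (m i : nat) (acc : Hm (Mo m.+1) (Mo m.+1)) :=
  hcomp (idm (Mo m.+1) - hcomp (s m i) (d m i.+1)) acc.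
Arguments pF m i acc : clear implicits.

Lemma pp_eq m : pp M m.+1 = foldr (pF m) (idm _) (iota 0 m.+1).
Proof. by []. Qed.

Lemma pp_fix_l a m (X : Hm a (Mo m.+1)) l :
  (forall i, (i <= m)%N -> hcomp (d m i.+1) X = 0) -> all (fun i => i <= m)%N l ->
  hcomp (foldr (pF m) (idm _) l) X = X.
Proof.
move=> HX; elim: l => [|i l IH] /=; first by rewrite comp1m.
case/andP => Hi Hl; rewrite /pF -hcompA IH // hcompBl comp1m -hcompA HX // hcomp0r subr0 //.
Qed.

Lemma pp_fix a m (X : Hm a (Mo m.+1)) :
  (forall i, (i <= m)%N -> hcomp (d m i.+1) X = 0) -> hcomp (pp M m.+1) X = X.
Proof.
move=> HX; rewrite pp_eq; apply: pp_fix_l => //.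
apply/allP => i; rewrite mem_iota; lia.
Qed.

Lemma C2 m i : forall l, (forall j, j \in l -> (i < j)%N && (j <= m)%N) ->
  exists G : Hm (Mo m) (Mo m), hcomp (foldr (pF m) (idm _) l) (s m i) = hcomp (s m i) G.
Proof.
elim=> [|j l IH] Hl /=.
  by exists (idm _); rewrite comp1m compm1.
have IH' : forall j', j' \in l -> (i < j')%N && (j' <= m)%N.
  by move=> j' Hj'; apply: Hl; rewrite in_cons Hj' orbT.
have [G HG] := IH IH'.
have /andP [Hj1 Hj2] := Hl j (mem_head _ _).
move: G HG Hj1 Hj2; case: m Hl IH IH' => [|m] Hl IH IH' G HG Hj1 Hj2; first by lia.
case: j Hl Hj1 Hj2 => [//|j] Hl Hj1 Hj2.
exists (hcomp (idm _ - hcomp (s m j) (d m j.+1)) G).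
rewrite /pF -hcompA HG hcompA hcompBl comp1m -hcompA (@ds_gt C M m) //.
rewrite hcompA (@ss C M m) //; last by lia.
rewrite -hcompA -{1}(compm1 (s m.+1 i)) -hcompBr hcompA //.
Qed.

Lemma fold_zero a m l Y (Z : Hm a (Mo m.+1)) : hcomp Y Z = 0 ->
  hcomp (foldr (pF m) Y l) Z = 0.
Proof. move=> H; elim: l => [|j l IH] //=. by rewrite /pF -hcompA IH hcomp0r. Qed.

Lemma pp_s m i : (i <= m)%N -> hcomp (pp M m.+1) (s m i) = 0.
Proof.
move=> Hi; rewrite pp_eq.
have -> : iota 0 m.+1 = iota 0 i ++ i :: iota i.+1 (m - i).
  have -> : m.+1 = (i + (m - i).+1)%N by lia.
  by rewrite iotaD.
rewrite foldr_cat; apply: fold_zero => /=.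
have Hl : forall j, j \in iota i.+1 (m - i) -> (i < j)%N && (j <= m)%N.
  by move=> j Hj; rewrite mem_iota in Hj; apply/andP; lia.
have [G HG] := @C2 m i (iota i.+1 (m - i)) Hl.
rewrite /pF -hcompA HG hcompA hcompBl comp1m -hcompA ds_id1 compm1 subrr hcomp0l //.
Qed.


Lemma B1 m j : (j <= m)%N -> exists W : Hm (Mo m.+1) (Mo m.+1),
  hcomp (kappaS M m.+1) (s m.+1 j.+1) = hcomp (s m.+1 j) W.
Proof.
move=> Hj; exists (sgn m.+2 (tn M m.+1 - hcomp (s m m.+1) (d m 0))).
rewrite kappa_eq hcomp_sgnl hcompBl ts; last by lia.
have c3 : ((0 < 0)%N || (j <= m)%N) by rewrite Hj orbT.
have c2 : (j <= m.+1)%N by lia.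
rewrite -hcompA (@ds_lt C M m 0 j isT c2 c3).
rewrite hcompA (@ss C M m j m.+1 c2 (leqnn _)).
by rewrite -hcompA -hcompBr hcomp_sgnr.
Qed.

Lemma B2 n : hcomp (kappaS M n) (s n n.+1) =
  hcomp (s n n.+1) (sgn n (tn M n)) + hcomp (s n n) (sgn n.+1 (tn M n)).
Proof.
rewrite kappa_eq hcomp_sgnl hcompBl ts // -hcompA -/(tn M n).
by rewrite sgnB !hcomp_sgnr !sgnS opprK addrC.
Qed.

Lemma B3 m k : (k <= m.+1)%N -> exists Y, @Span (Mo m.+1) m.+1 (m.+2 - k) m.+1 Y /\
  hcomp (hpow (kappaS M m.+1) k) (s m.+1 m.+2) =
  hcomp (s m.+1 m.+2) (hpow (sgn m.+1 (tn M m.+1)) k) + Y.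
Proof.
elim: k => [|k IH] Hk.
  exists 0; split; first exact: Sp0.
  by rewrite /= comp1m compm1 addr0.
have [Y [HY E]] := IH (ltnW Hk).
exists (hcomp (s m.+1 m.+1) (hcomp (sgn m.+2 (tn M m.+1)) (hpow (sgn m.+1 (tn M m.+1)) k))
        + hcomp (kappaS M m.+1) Y); split.
  apply: SpD; first by apply: SpG; lia.
  apply: (Span_map _ HY) => j H1 H2.
  case: j H1 H2 => [|j] H1 H2; first by lia.
  have Hj : (j <= m)%N by lia.
  have [W HW] := B1 Hj.
  exists j, W; split => //; lia.
rewrite hpowS -hcompA E compDr hcompA B2 compDl -!hcompA addrA //.
Qed.

Lemma B4 m (Y : Hm (Mo m.+1) (Mo m.+2)) : @Span (Mo m.+1) m.+1 1 m.+1 Y ->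
  @Span (Mo m.+1) m 0 m (hcomp (d m.+1 0) Y).
Proof.
apply: Span_map => j H1 H2.
case: j H1 H2 => [|j] H1 H2 //.
exists j, (d m 0); split => //.
have c3 : ((0 < 0)%N || (j <= m)%N) by apply/orP; right; lia.
have c2 : (j <= m.+1)%N by lia.
by rewrite (@ds_lt C M m 0 j isT c2 c3).
Qed.

Lemma B5 m (Y : Hm (Mo m.+1) (Mo m.+1)) : @Span (Mo m.+1) m 0 m Y ->
  hcomp (pp M m.+1) Y = 0.
Proof.
elim=> [|y z _ Hy _ Hz|j Z H1 H2].
- exact: hcomp0r.
- by rewrite compDr Hy Hz addr0.
- by rewrite hcompA pp_s // hcomp0l.
Qed.

Lemma B6 m : exists Z, @Span (Mo m.+1) m 0 m Z /\ piDK M m.+1 = TT M m.+1 + Z.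
Proof.
have [Y [HY E]] := @B3 m m.+1 (leqnn _).
have e : (m.+2 - m.+1 = 1)%N by lia.
rewrite e in HY.
exists (sgn m.+1 (hcomp (d m.+1 0) Y)); split.
  apply: Span_sgn; exact: B4.
rewrite /piDK E compDr hcompA -/(tn M m.+1) sgnD hpow_sgn hcomp_sgnr sgn_sgn //.
Qed.

Lemma TT_s m j : hcomp (TT M m.+1) (s m j) = hcomp (s m j) (TT M m).
Proof. exact: TT_nat (LP_etaL m j). Qed.
Lemma TT_d m j : hcomp (TT M m) (d m j) = hcomp (d m j) (TT M m.+1).
Proof. exact: TT_nat (LP_eps m j). Qed.

Lemma TT_fold m l : hcomp (TT M m.+1) (foldr (pF m) (idm _) l) =
  hcomp (foldr (pF m) (idm _) l) (TT M m.+1).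
Proof.
elim: l => [|j l IH] /=; first by rewrite comp1m compm1.
rewrite /pF hcompA hcompBr compm1 hcompA TT_s -hcompA TT_d hcompA.
rewrite -{1}(comp1m (TT M m.+1)) -hcompBl -hcompA; rewrite -/(pF m) IH hcompA //.
Qed.

Lemma TT_pp m : hcomp (TT M m.+1) (pp M m.+1) = hcomp (pp M m.+1) (TT M m.+1).
Proof. by rewrite pp_eq TT_fold. Qed.

Lemma part1 n : piDK M n = hcomp (pp M n) (TT M n) /\
                piDK M n = hcomp (TT M n) (pp M n).
Proof.
case: n => [|m].
  have E : piDK M 0 = tn M 0 by rewrite /piDK /sgn /= comp1m.
  have T0 : TT M 0 = tn M 0 by rewrite /TT /= compm1.
  by rewrite E T0 /= comp1m compm1.
have [Z [HZ E]] := B6 m.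
have H1 : piDK M m.+1 = hcomp (pp M m.+1) (piDK M m.+1).
  by rewrite pp_fix // => i Hi; apply: A4.
have H2 : piDK M m.+1 = hcomp (pp M m.+1) (TT M m.+1).
  by rewrite {1}H1 {1}E compDr (B5 HZ) addr0.
by split => //; rewrite H2 TT_pp.
Qed.

End Main.

Theorem mainTheorem2 (C : PreAdd) (M : Duplicial C) :
  (forall n : nat, piDK M n = hcomp (pp M n) (TT M n) /\
                   piDK M n = hcomp (TT M n) (pp M n)) /\
  ((forall n : nat, TT M n = idm (Mobj M n)) ->
   forall n : nat, piDK M n = pp M n).
Proof.
split; first exact: part1.
move=> HT n; have [H _] := part1 M n.
by rewrite H HT compm1.
Qed.
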